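(* A graph $G$ satisfies $\overline{\mu_\alpha}(G)\le 1$ if and only if $G$ is $\{\text{claw}, 2P_3\}$-free.
   Context: All graphs are finite, simple and undirected. For a graph $G$, $\alpha(G)$ is the maximum size of an independent set and $i(G)$ is the minimum size of a maximal (with respect to inclusion) independent set; the independence gap is $\mu_\alpha(G)=\alpha(G)-i(G)$. The hereditary independence gap is $\overline{\mu_\alpha}(G)=\max\{\mu_\alpha(H): H \text{ an induced subgraph of } G\}$. The claw is $K_{1,3}$; $P_3$ is the path on 3 vertices and $2P_3$ is the disjoint union of two copies of $P_3$. For a set $\mathcal F$ of graphs, $G$ is $\mathcal F$-free if no induced subgraph of $G$ is isomorphic to a member of $\mathcal F$. *)

(* Defs.v *)
(* A finite simple graph is a finType T with a symmetric,
   irreflexive adjacency relation e : rel T. *)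
From mathcomp Require Import all_boot.
Set Implicit Arguments. Unset Strict Implicit. Unset Printing Implicit Defensive.

Section Graphs.
Variables (T : finType) (e : rel T).

Definition independent (A : {set T}) : bool :=
  [forall x in A, forall y in A, ~~ e x y].

(* A is a maximal (w.r.t. inclusion) independent set of the induced subgraph G[S] *)
Definition maximal_independent_in (S A : {set T}) : bool :=
  [&& A \subset S, independent A &
      [forall x in S :\: A, ~~ independent (x |: A)]].

Definition alpha_in (S : {set T}) : nat :=
  \max_(A : {set T} | (A \subset S) && independent A) #|A|.

(* i(G[S]) : minimum size of a maximal independent set of G[S]
   (such a set always exists, so the default #|S| is never the answer
   unless it is attained). *)
Definition i_in (S : {set T}) : nat :=
  \big[minn/#|S|]_(A : {set T} | maximal_independent_in S A) #|A|.

Definition mu_in (S : {set T}) : nat := alpha_in S - i_in S.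

Definition hered_gap : nat := \max_(S : {set T}) mu_in S.

End Graphs.

Definition has_induced (V T : finType) (h : rel V) (e : rel T) : Prop :=
  exists f : V -> T, injective f /\ forall x y, e (f x) (f y) = h x y.

Definition claw : rel 'I_4 :=
  fun x y => ((val x == 0) && (val y != 0)) || ((val y == 0) && (val x != 0)).

Definition twoP3 : rel 'I_6 :=
  fun x y => (val x, val y) \in
    [:: (0,1); (1,0); (1,2); (2,1); (3,4); (4,3); (4,5); (5,4)].

(* Main.v *)
Require Import Defs.
From mathcomp Require Import all_boot zify.
Set Implicit Arguments. Unset Strict Implicit. Unset Printing Implicit Defensive.

Section Aux.
Variables (T : finType) (e : rel T).
Hypotheses (e_sym : symmetric e) (e_irr : irreflexive e).

Lemma indepP (A : {set T}) :
  reflect {in A &, forall x y, ~~ e x y} (independent e A).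
Proof.
apply: (iffP forallP) => [H x y xA yA | H x].
  by move/implyP: (H x) => /(_ xA) /forallP /(_ y) /implyP /(_ yA).
apply/implyP => xA; apply/forallP => y; apply/implyP => yA; exact: H.
Qed.

Lemma claw_build x a b c :
  e x a -> e x b -> e x c -> ~~ e a b -> ~~ e a c -> ~~ e b c ->
  a != b -> a != c -> b != c -> has_induced claw e.
Proof.
move=> xa xb xc nab nac nbc dab dac dbc.
have ax : e a x by rewrite e_sym. have bx : e b x by rewrite e_sym.
have cx : e c x by rewrite e_sym.
have nba : ~~ e b a by rewrite e_sym. have nca : ~~ e c a by rewrite e_sym.
have ncb : ~~ e c b by rewrite e_sym.
have dxa : x != a by apply: contraTneq xa => ->; rewrite e_irr.
have dxb : x != b by apply: contraTneq xb => ->; rewrite e_irr.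
have dxc : x != c by apply: contraTneq xc => ->; rewrite e_irr.
pose s := [:: x; a; b; c].
have us : uniq s by rewrite /= !inE !negb_or dxa dxb dxc dab dac dbc.
exists (fun i : 'I_4 => nth x s i); split.
  by move=> i j /eqP; rewrite nth_uniq // => /eqP /val_inj.
case=> [[|[|[|[|i]]]] Hi] [[|[|[|[|j]]]] Hj] //=;
  by rewrite /claw /= ?e_irr ?xa ?xb ?xc ?ax ?bx ?cx ?(negbTE nab) ?(negbTE nac)
     ?(negbTE nbc) ?(negbTE nba) ?(negbTE nca) ?(negbTE ncb).
Qed.

Lemma p3_build u a1 a2 v b1 b2 :
  e u a1 -> e u a2 -> e v b1 -> e v b2 ->
  ~~ e u b1 -> ~~ e u b2 -> ~~ e v a1 -> ~~ e v a2 -> ~~ e u v ->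
  ~~ e a1 a2 -> ~~ e a1 b1 -> ~~ e a1 b2 -> ~~ e a2 b1 -> ~~ e a2 b2 -> ~~ e b1 b2 ->
  a1 != a2 -> b1 != b2 -> a1 != b1 -> a1 != b2 -> a2 != b1 -> a2 != b2 -> u != v ->
  has_induced twoP3 e.
Proof.
move=> ua1 ua2 vb1 vb2 nub1 nub2 nva1 nva2 nuv n12 n11 n12' n21 n22 nbb
  d12 dbb d11 d12' d21 d22 duv.
have a1u : e a1 u by rewrite e_sym. have a2u : e a2 u by rewrite e_sym.
have b1v : e b1 v by rewrite e_sym. have b2v : e b2 v by rewrite e_sym.
have nb1u : ~~ e b1 u by rewrite e_sym. have nb2u : ~~ e b2 u by rewrite e_sym.
have na1v : ~~ e a1 v by rewrite e_sym. have na2v : ~~ e a2 v by rewrite e_sym.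
have nvu : ~~ e v u by rewrite e_sym.
have n21' : ~~ e a2 a1 by rewrite e_sym. have n11' : ~~ e b1 a1 by rewrite e_sym.
have n12'' : ~~ e b2 a1 by rewrite e_sym. have n21'' : ~~ e b1 a2 by rewrite e_sym.
have n22' : ~~ e b2 a2 by rewrite e_sym. have nbb' : ~~ e b2 b1 by rewrite e_sym.
have dua1 : a1 != u by apply: contraTneq ua1 => ->; rewrite e_irr.
have dua2 : a2 != u by apply: contraTneq ua2 => ->; rewrite e_irr.
have dvb1 : b1 != v by apply: contraTneq vb1 => ->; rewrite e_irr.
have dvb2 : b2 != v by apply: contraTneq vb2 => ->; rewrite e_irr.
have dub1 : u != b1 by apply: contraTneq vb1 => <-; rewrite e_sym.
have dub2 : u != b2 by apply: contraTneq vb2 => <-; rewrite e_sym.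
have dva1 : a1 != v by apply: contraTneq ua1 => ->; rewrite e_sym.
have dva2 : a2 != v by apply: contraTneq ua2 => ->; rewrite e_sym.
pose s := [:: a1; u; a2; b1; v; b2].
have us : uniq s.
  rewrite /= !inE !negb_or dua1 d12 d11 dva1 d12' (eq_sym u) dua2 dub1 duv dub2.
  by rewrite d21 dva2 d22 dvb1 dbb (eq_sym v) dvb2.
exists (fun i : 'I_6 => nth u s i); split.
  by move=> i j /eqP; rewrite nth_uniq // => /eqP /val_inj.
case=> [[|[|[|[|[|[|i]]]]]] Hi] [[|[|[|[|[|[|j]]]]]] Hj] //=;
  by rewrite /twoP3 /= ?e_irr ?ua1 ?ua2 ?vb1 ?vb2 ?a1u ?a2u ?b1v ?b2v
  ?(negbTE nub1) ?(negbTE nub2) ?(negbTE nva1) ?(negbTE nva2) ?(negbTE nuv)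
  ?(negbTE n12) ?(negbTE n11) ?(negbTE n12') ?(negbTE n21) ?(negbTE n22) ?(negbTE nbb)
  ?(negbTE nb1u) ?(negbTE nb2u) ?(negbTE na1v) ?(negbTE na2v) ?(negbTE nvu)
  ?(negbTE n21') ?(negbTE n11') ?(negbTE n12'') ?(negbTE n21'') ?(negbTE n22') ?(negbTE nbb').
Qed.
End Aux.

Section Key.
Variables (T : finType) (e : rel T).
Hypotheses (e_sym : symmetric e) (e_irr : irreflexive e).
Hypotheses (ncl : ~ has_induced claw e) (np3 : ~ has_induced twoP3 e).

Lemma key (S A I : {set T}) : A \subset S -> independent e A ->
  maximal_independent_in e S I -> #|A| <= #|I| + 1.
Proof.
move=> AS /indepP indA /and3P [IS /indepP indI /forall_inP maxI].
set X := I :\: A; set Y := A :\: I.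
have cA : #|A| = #|A :&: I| + #|Y| by rewrite cardsID.
have cI : #|I| = #|A :&: I| + #|X| by rewrite setIC cardsID.
suff : #|Y| <= #|X| + 1 by lia.
have adj : forall y, y \in Y -> exists2 z, z \in X & e y z.
  move=> y; rewrite !inE => /andP [yI yA].
  have := maxI y; rewrite !inE yI (subsetP AS _ yA) => /(_ isT).
  rewrite /independent negb_forall_in => /existsP [u /andP [uin]].
  rewrite negb_forall_in => /existsP [v /andP [vin]]; rewrite negbK => euv.
  move: uin vin; rewrite !inE => /orP [/eqP Hu|uI] /orP [/eqP Hv|vI]; subst.
  - by rewrite e_irr in euv.
  - exists v => //; rewrite !inE vI andbT.
    by apply/negP => vA; move: (indA _ _ yA vA); rewrite euv.
  - exists u; last by rewrite e_sym.
    rewrite !inE uI andbT; apply/negP => uA; move: (indA _ _ yA uA).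
    by rewrite e_sym euv.
  - by move: (indI _ _ uI vI); rewrite euv.
pose f y := odflt y [pick z in X | e y z].
have fP : forall y, y \in Y -> (f y \in X) && e y (f y).
  move=> y /adj [z zX eyz]; rewrite /f; case: pickP => [w /andP [-> ->] //|].
  by move/(_ z); rewrite zX eyz.
have YA : Y \subset A by apply: subsetDl.
have XI : X \subset I by apply: subsetDl.
have XnA : forall x, x \in X -> x \notin A by move=> x; rewrite !inE => /andP [].
have noc : forall x a b c, a \in A -> b \in A -> c \in A -> e x a -> e x b -> e x c ->
    a != b -> a != c -> b != c -> False.
  move=> x a b c ha hb hc xa xb xc dab dac dbc; apply: ncl.
  by apply: (claw_build e_sym e_irr xa xb xc (indA _ _ ha hb) (indA _ _ ha hc) (indA _ _ hb hc)).
have fXu : forall y, y \in Y -> f y \in X by move=> y /fP /andP [].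
have fe : forall y, y \in Y -> e (f y) y by move=> y /fP /andP [_]; rewrite e_sym.
have inA : forall y, y \in Y -> y \in A by move=> y; apply: (subsetP YA).
have injP : forall Z : {set T}, [forall y1 in Z, forall y2 in Z, (f y1 == f y2) ==> (y1 == y2)]
   -> {in Z &, injective f}.
  move=> Z H y1 y2 h1 h2 /eqP E.
  by move/forall_inP: H => /(_ _ h1) /forall_inP /(_ _ h2) /implyP /(_ E) /eqP.
case: (boolP [forall y1 in Y, forall y2 in Y, (f y1 == f y2) ==> (y1 == y2)]) => [inj | ninj].
  have : #|f @: Y| <= #|X|.
    by apply: subset_leq_card; apply/subsetP => _ /imsetP [y yY ->]; apply: fXu.
  rewrite card_in_imset; [lia | exact: injP].
move: ninj; rewrite negb_forall_in => /existsP [y1 /andP [y1Y]].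
rewrite negb_forall_in => /existsP [y2 /andP [y2Y]].
rewrite negb_imply => /andP [/eqP f12 d12].
set u := f y1.
have uX : u \in X by apply: fXu.
have uy1 : e u y1 by apply: fe.
have uy2 : e u y2 by rewrite /u f12; apply: fe.
set Y' := Y :\ y2 :\ y1.
have Y'P : forall y, y \in Y' -> [/\ y != y1, y != y2 & y \in Y].
  by move=> y; rewrite !inE => /and3P [].
have fu : forall y, y \in Y' -> f y != u.
  move=> y /Y'P [dy1 dy2 yY]; apply/eqP => fyu.
  have := fe _ yY; rewrite fyu => uy.
  by apply: (noc u y1 y2 y (inA _ y1Y) (inA _ y2Y) (inA _ yY) uy1 uy2 uy d12);
     rewrite eq_sym.
have cY : #|Y| = (#|Y'|).+2.
  by rewrite (cardsD1 y2 Y) y2Y (cardsD1 y1 (Y :\ y2)) in_setD1 d12 y1Y.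
have cX : #|X| = (#|X :\ u|).+1 by rewrite (cardsD1 u X) uX.
case: (boolP [forall y1 in Y', forall y2 in Y', (f y1 == f y2) ==> (y1 == y2)]) => [inj | ninj].
  have : #|f @: Y'| <= #|X :\ u|.
    apply: subset_leq_card; apply/subsetP => _ /imsetP [y yY ->].
    have [_ _ yY0] := Y'P _ yY.
    by rewrite !inE fu // andTb; case/andP: (fP _ yY0) => /setDP [-> ->].
  rewrite card_in_imset; [lia | exact: injP].
move: ninj; rewrite negb_forall_in => /existsP [b1 /andP [b1Y]].
rewrite negb_forall_in => /existsP [b2 /andP [b2Y]].
rewrite negb_imply => /andP [/eqP g12 db12].
set v := f b1.
have [d11 d12' b1Y0] := Y'P _ b1Y.
have [d21 d22 b2Y0] := Y'P _ b2Y.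
have vb1 : e v b1 by apply: fe.
have vb2 : e v b2 by rewrite /v g12; apply: fe.
have vX : v \in X by apply: fXu.
have duv : u != v by rewrite eq_sym; apply: fu.
have nub : forall b, b \in Y' -> ~~ e u b.
  move=> b /Y'P [h1 h2 hY]; apply/negP => ub.
  by apply: (noc u y1 y2 b (inA _ y1Y) (inA _ y2Y) (inA _ hY) uy1 uy2 ub d12);
     rewrite eq_sym.
have nva : forall a, a \in Y -> a != b1 -> a != b2 -> ~~ e v a.
  move=> a aY h1 h2; apply/negP => va.
  by apply: (noc v b1 b2 a (inA _ b1Y0) (inA _ b2Y0) (inA _ aY) vb1 vb2 va db12);
     rewrite eq_sym.
exfalso; apply: np3.
apply: (p3_build e_sym e_irr uy1 uy2 vb1 vb2 (nub _ b1Y) (nub _ b2Y)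
  (nva _ y1Y _ _) (nva _ y2Y _ _)) => //; try by rewrite eq_sym.
- exact: indI (subsetP XI _ uX) (subsetP XI _ vX).
- exact: indA (inA _ y1Y) (inA _ y2Y).
- exact: indA (inA _ y1Y) (inA _ b1Y0).
- exact: indA (inA _ y1Y) (inA _ b2Y0).
- exact: indA (inA _ y2Y) (inA _ b1Y0).
- exact: indA (inA _ y2Y) (inA _ b2Y0).
- exact: indA (inA _ b1Y0) (inA _ b2Y0).
Qed.
End Key.

Section Fwd.
Variables (T : finType) (e : rel T).
Hypotheses (e_sym : symmetric e) (e_irr : irreflexive e).

Lemma bigmin_le (U : eqType) (r : seq U) (P : pred U) (F : U -> nat) d x :
  x \in r -> P x -> \big[minn/d]_(y <- r | P y) F y <= F x.
Proof.
elim: r => // a r IH; rewrite inE big_cons => /orP [/eqP <- ->|xr Px].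
  by rewrite geq_minl.
case: ifP => _; last exact: IH.
by rewrite (leq_trans (geq_minr _ _)) // IH.
Qed.

Lemma card3 (a b c : T) : uniq [:: a; b; c] -> #|[set a; b; c]| = 3.
Proof.
move=> u; have -> : [set a; b; c] = [set x in [:: a; b; c]].
  by apply/setP => z; rewrite !inE orbA.
by rewrite cardsE (card_uniqP u).
Qed.

Lemma card4 (a b c d : T) : uniq [:: a; b; c; d] -> #|[set a; b; c; d]| = 4.
Proof.
move=> u; have -> : [set a; b; c; d] = [set x in [:: a; b; c; d]].
  by apply/setP => z; rewrite !inE !orbA.
by rewrite cardsE (card_uniqP u).
Qed.

Lemma gap_witness (S A I : {set T}) : A \subset S -> independent e A ->
  maximal_independent_in e S I -> #|I| + 2 <= #|A| -> 1 < hered_gap e.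
Proof.
move=> AS iA mI c.
have h1 : #|A| <= alpha_in e S by apply: (@leq_bigmax_cond _ (fun B : {set T} => (B \subset S) && independent e B) (fun B : {set T} => #|B|)); rewrite AS iA.
have h2 : i_in e S <= #|I| by apply: bigmin_le; rewrite ?mem_index_enum.
have h3 : mu_in e S <= hered_gap e by rewrite /hered_gap; exact: (@leq_bigmax _ (fun S0 => mu_in e S0) S).
rewrite /mu_in in h3; lia.
Qed.

Definition o4 (k : nat) (h : k < 4) : 'I_4 := Ordinal h.
Definition o6 (k : nat) (h : k < 6) : 'I_6 := Ordinal h.

Lemma claw_gap : has_induced claw e -> 1 < hered_gap e.
Proof.
move=> [f [finj fe]].
set x0 := f (@o4 0 isT); set x1 := f (@o4 1 isT); set x2 := f (@o4 2 isT);
set x3 := f (@o4 3 isT).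
apply: (@gap_witness (x0 |: [set x1; x2; x3]) [set x1; x2; x3] [set x0]).
- by apply: subsetUr.
- apply/indepP => a b; rewrite !inE -!orbA => /or3P [] /eqP -> /or3P [] /eqP ->;
  by rewrite fe.
- apply/and3P; split.
  + by rewrite sub1set !inE eqxx.
  + by apply/indepP => a b; rewrite !inE => /eqP -> /eqP ->; rewrite e_irr.
  + apply/forall_inP => y; rewrite !inE => /andP [ny0].
    rewrite -!orbA => /or4P [] /eqP ey; first by rewrite ey eqxx in ny0.
    1-3: apply/negP => /indepP /(_ y x0); rewrite !inE !eqxx ?orbT => /(_ isT isT);
         by rewrite ey fe.
- by rewrite cards1 card3 //= !inE !(inj_eq finj).
Qed.

Lemma p3_gap : has_induced twoP3 e -> 1 < hered_gap e.
Proof.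
move=> [f [finj fe]].
set x0 := f (@o6 0 isT); set x1 := f (@o6 1 isT); set x2 := f (@o6 2 isT);
set x3 := f (@o6 3 isT); set x4 := f (@o6 4 isT); set x5 := f (@o6 5 isT).
apply: (@gap_witness ([set x1; x4] :|: [set x0; x2; x3; x5]) [set x0; x2; x3; x5] [set x1; x4]).
- by apply: subsetUr.
- apply/indepP => a b; rewrite !inE -!orbA => /or4P [] /eqP -> /or4P [] /eqP ->;
  by rewrite fe.
- apply/and3P; split.
  + by apply: subsetUl.
  + by apply/indepP => a b; rewrite !inE => /orP [] /eqP -> /orP [] /eqP ->;
       rewrite fe.
  + apply/forall_inP => y; rewrite !inE => /andP [ny].
    rewrite -!orbA => /or3P [/eqP ey|/eqP ey|].
    1,2: by rewrite ey eqxx ?orbT in ny.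
    move=> /or4P [] /eqP ey.
    1,2: apply/negP => /indepP /(_ y x1); rewrite !inE !eqxx ?orbT => /(_ isT isT);
         by rewrite ey fe.
    1,2: apply/negP => /indepP /(_ y x4); rewrite !inE !eqxx ?orbT => /(_ isT isT);
         by rewrite ey fe.
- rewrite cards2 card4; last by rewrite /= !inE !(inj_eq finj).
  by case: (x1 != x4).
Qed.
End Fwd.

Theorem mainTheorem10 (T : finType) (e : rel T)
  (e_sym : symmetric e) (e_irr : irreflexive e) :
  hered_gap e <= 1 <-> (~ has_induced claw e /\ ~ has_induced twoP3 e).
Proof.
split.
  move=> H; split => [hc|hp].
    by move: (claw_gap e_irr hc); rewrite ltnNge H.
  by move: (p3_gap hp); rewrite ltnNge H.
case=> ncl np3.
apply/bigmax_leqP => S _; rewrite /mu_in leq_subLR.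
apply/bigmax_leqP => A /andP [AS iA]; rewrite /i_in.
apply: (big_ind (fun m => #|A| <= m + 1)).
- by rewrite (leq_trans (subset_leq_card AS)) ?leq_addr.
- by move=> m1 m2 h1 h2; rewrite /minn; case: ifP.
- by move=> I mI; exact: (key e_sym e_irr ncl np3 AS iA mI).
Qed.
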